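(* Let $k\ge 1$, let $b_0<\dots<b_k$ and $r_0>\dots>r_k=0$ be reals, let $s_i=\frac{b_i-b_{i-1}}{r_{i-1}-r_i}$ for $1\le i\le k$, and assume $s_1<\dots<s_k$. Let $p^i_1(t)=\min\{1,(e^{t/s_i}-1)/(e-1)\}$ for $1\le i\le k$, and let $\hat p_0=1-p^1_1$, $\hat p_i=p^i_1-p^{i+1}_1$ ($1\le i\le k-1$), $\hat p_k=p^k_1$. Then there is an online randomized strategy, i.e. a random nondecreasing sequence of transition times $0\le t_1\le t_2\le\dots\le t_k\le\infty$ (where $t_i$ is the time of the transition from state $i-1$ to state $i$, starting in state $0$), whose profile is $\hat p$: for every $t\ge 0$ and every $i\in\{0,\dots,k\}$, the probability that the strategy is in state $i$ at time $t$ equals $\hat p_i(t)$.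
   Context: In the additive multislope ski rental problem there are states $0,\dots,k$; state $i$ has buying cost $b_i$ and rental rate $r_i$, transitions are only of the form $i-1\to i$, and a deterministic strategy is a nondecreasing sequence of transition times. A randomized strategy is a probability distribution over deterministic strategies; its profile is the vector $(p_0(t),\dots,p_k(t))$ where $p_i(t)$ is the probability of being in state $i$ at time $t$. *)

(* Defs.v *)
From HB Require Import structures.
From mathcomp Require Import all_boot all_order all_algebra.
From mathcomp Require Import all_classical all_reals all_analysis.
From mathcomp Require Import measurable_realfun.
Set Implicit Arguments. Unset Strict Implicit. Unset Printing Implicit Defensive.
Import Order.TTheory GRing.Theory Num.Theory.
Local Open Scope ring_scope.

Definition slope {R : realType} (b r : nat -> R) (i : nat) : R :=
  (b i - b i.-1) / (r i.-1 - r i).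

Definition p1 {R : realType} (s : nat -> R) (i : nat) (t : R) : R :=
  Num.min 1 ((expR (t / s i) - 1) / (expR 1 - 1)).

Definition phat {R : realType} (k : nat) (s : nat -> R) (i : nat) (t : R) : R :=
  if i == 0%N then 1 - p1 s 1 t
  else if (i < k)%N then p1 s i t - p1 s i.+1 t
  else p1 s k t.

(* State at time x of the deterministic strategy with transition times
   tt 1, ..., tt k (tt i = time of the transition i-1 -> i, in [0, +oo]):
   the number of transitions already performed, i.e. #{ i in 1..k | tt i <= x }. *)
Definition state {R : realType} (k : nat) (tt : nat -> \bar R) (x : R) : nat :=
  (\sum_(1 <= i < k.+1) ((tt i <= x%:E)%E : nat))%N.

(* Main.v *)
Require Import Defs.
From HB Require Import structures.
From mathcomp Require Import all_boot all_order all_algebra.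
From mathcomp Require Import all_classical all_reals all_analysis.
From mathcomp Require Import measurable_realfun.
From mathcomp Require Import zify.
Import Order.TTheory GRing.Theory Num.Theory.
Local Open Scope ring_scope.
Local Open Scope classical_set_scope.

Lemma thr (R : realType) (s c x w : R) : 0 < s -> 0 < c -> 0 <= x ->
  ((s * ln (1 + c * Num.max w 0))%:E <= x%:E)%E = (w <= (expR (x / s) - 1) / c).
Proof.
move=> s0 c0 x0; rewrite lee_fin mulrC -ler_pdivlMr //.
have m0 : 0 <= Num.max w 0 by rewrite le_max lexx orbT.
have a0 : 0 < 1 + c * Num.max w 0 by rewrite ltr_pwDl // mulr_ge0 // ltW.
rewrite -{1}(expRK (x / s)) ler_ln ?posrE ?expR_gt0 //.
rewrite -lerBrDl ler_pdivlMr // mulrC -ler_pdivlMr // -ler_pdivlMr // ge_max.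
suff -> : 0 <= (expR (x / s) - 1) / c by rewrite andbT.
by rewrite divr_ge0 ?(ltW c0) // subr_ge0 -expR0 ler_expR divr_ge0 // ltW.
Qed.
Lemma mle (R : realType) (q : R) : measurable [set w : R | w <= q].
Proof.
have -> : [set w : R | w <= q] = `]-oo, q]%classic.
  by apply/seteqP; split=> w; rewrite /= in_itv.
exact: measurable_itv.
Qed.

Definition U01 (R : realType) : probability _ R := uniform_prob (@ltr01 R).

Lemma unifF (R : realType) (q : R) : 0 <= q ->
  U01 R [set w | w <= q] = (Num.min 1 q)%:E.
Proof.
move=> q0; rewrite /U01 /= /uniform_prob.
have [q1|q1] := leP 1 q.
  rewrite integral_uniform_pdf1 //.
  by move=> w; rewrite /= in_itv /= => /andP[_ w1]; apply: le_trans q1.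
rewrite integral_uniform_pdf.
have -> : [set w : R | w <= q] `&` `[0, 1] = `[0, q]%classic.
  apply/seteqP; split=> w; rewrite /= !in_itv /=.
    by move=> [wq /andP[w0 _]]; rewrite w0 wq.
  by move=> /andP[w0 wq]; split=> //; rewrite w0 (le_trans wq (ltW q1)).
rewrite (eq_integral (cst 1%:E)); last first.
  by move=> w; rewrite inE /= in_itv /= /uniform_pdf => /andP[-> wq];
    rewrite (le_trans wq (ltW q1)) subr0 invr1.
rewrite integral_cst // mul1e; have := lebesgue_measure_itv `[0, q]%R; rewrite /= lte_fin => ->; case: ltgtP q0 => // [_ _|<- _]; rewrite ?subr0 //. all: by rewrite -EFinD subr0.
Qed.
Section Cnt.
Local Open Scope nat_scope.
Lemma count_char (f : nat -> bool) k :
  (forall j, 1 <= j -> j < k -> f j.+1 -> f j) ->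
  \sum_(1 <= j < k.+1) f j <= k /\
  forall j, 1 <= j <= k -> f j = (j <= \sum_(1 <= j < k.+1) f j).
Proof.
elim: k => [|k IH] anti.
  by rewrite big_geq //; split => // j; lia.
have [Sk Hk] := IH (fun j j1 jk => anti j j1 (ltnW jk)).
rewrite big_nat_recr //=.
case fk: (f k.+1).
  have allf : forall j, 1 <= j <= k -> f j.
    have H : forall d, d <= k -> f (k.+1 - d).
      elim=> [|d IHd] dk; first by rewrite subn0.
      have := anti (k.+1 - d.+1); have -> : (k.+1 - d.+1).+1 = k.+1 - d by lia.
      apply; [lia|lia|apply: IHd; lia].
    move=> j /andP[j1 jk]; have := H (k.+1 - j); have -> : k.+1 - (k.+1 - j) = j by lia.
    apply; lia.
  have Skk : \sum_(1 <= j < k.+1) f j = k.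
    apply/eqP; rewrite eqn_leq Sk /=.
    have := Hk k; case: (posnP k) => [->|k0] //.
    move=> H; have : f k by apply: allf; lia. rewrite H //; lia.
  rewrite Skk; split; first lia.
  move=> j jk1; case: (ltnP j k.+1) => jk; last by (have -> : j = k.+1 by lia); rewrite fk addn1 leqnn.
  rewrite allf ?addn1; lia.
split; first by rewrite addn0; lia.
move=> j /andP[j1]; rewrite leq_eqVlt => /orP[/eqP->|jk]; first by rewrite fk addn0; lia.
by rewrite addn0 Hk // j1.
Qed.

Lemma count_eq (f : nat -> bool) k i :
  (forall j, 1 <= j -> j < k -> f j.+1 -> f j) -> 1 <= k -> i <= k ->
  (\sum_(1 <= j < k.+1) f j == i) = ((i == 0) || f i) && ((i == k) || ~~ f i.+1).
Proof.
move=> anti k1 ik; have [Sk Hk] := @count_char f k anti.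
set S := \sum_(1 <= j < k.+1) f j in Sk Hk *.
case: (posnP i) => [->|i0].
  rewrite orTb /= (eq_sym 0 k) (gtn_eqF k1) /= Hk ?leqnn ?k1 //; lia.
rewrite /= Hk ?i0 ?ik //.
case: (ltnP i k) => ik'.
  rewrite (ltn_eqF ik') /= Hk //; lia.
have -> : i = k by lia.
rewrite eqxx /=; lia.
Qed.
End Cnt.
Theorem lemma3p3 (R : realType) (k : nat) (b r : nat -> R) :
  (1 <= k)%N ->
  (forall i, (i < k)%N -> b i < b i.+1) ->
  (forall i, (i < k)%N -> r i.+1 < r i) ->
  r k = 0 ->
  (forall i, (1 <= i)%N -> (i < k)%N -> slope b r i < slope b r i.+1) ->
  exists (d : measure_display) (T : measurableType d) (P : probability T R)
         (tt : nat -> T -> \bar R),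
    (forall i, (1 <= i <= k)%N -> measurable_fun [set: T] (tt i : T -> \bar R)) /\
    (forall w, (0 <= tt 1%N w)%E /\
               (forall i, (1 <= i)%N -> (i < k)%N -> (tt i w <= tt i.+1 w)%E)) /\
    (forall (x : R) (i : nat), 0 <= x -> (i <= k)%N ->
       P [set w | state k (fun j => tt j w) x = i] = (phat k (slope b r) i x)%:E).
Proof.
move=> k1 hb hr rk hs.
pose s := slope b r.
have s0 : forall i, (1 <= i <= k)%N -> 0 < s i.
  move=> i /andP[i1 ik]; rewrite /s /slope divr_gt0 // subr_gt0.
    by have := hb i.-1; rewrite prednK //; apply; lia.
  by have := hr i.-1; rewrite prednK //; apply; lia.
pose c := expR 1 - 1 : R.
have c0 : 0 < c by rewrite subr_gt0 expR_gt1.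
have L0 : forall w : R, 0 <= ln (1 + c * Num.max w 0).
  move=> w; apply: ln_ge0; rewrite lerDl mulr_ge0 ?(ltW c0) //.
  by rewrite le_max lexx orbT.
pose tt := fun (i : nat) (w : R) => (s i * ln (1 + c * Num.max w 0))%:E.
eexists; eexists; exists (U01 R), tt.
split.
  move=> i _; apply/measurable_EFinP; apply: measurable_funM => //.
  apply: measurableT_comp; first exact: measurable_ln.
  apply: measurable_funD => //; apply: measurable_funM => //.
  exact: measurable_maxr.
split.
  move=> w; split.
    by rewrite lee_fin mulr_ge0 // ltW // s0.
  move=> i i1 ik; rewrite lee_fin ler_wpM2r // ltW //.
  exact: hs.
move=> x i x0 ik.
pose Q := fun j => (expR (x / s j) - 1) / c.
have Q0 : forall j, (1 <= j <= k)%N -> 0 <= Q j.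
  move=> j jk; rewrite divr_ge0 ?(ltW c0) // subr_ge0 -expR0 ler_expR divr_ge0 //.
  exact/ltW/s0.
have Qmono : forall j, (1 <= j)%N -> (j < k)%N -> Q j.+1 <= Q j.
  move=> j j1 jk; rewrite ler_pM2r ?invr_gt0 // lerD2r ler_expR.
  rewrite ler_wpM2l // lef_pV2 ?posrE ?s0 ?j1 ?(ltnW jk) //.
  - exact/ltW/hs.
have setE : [set w | state k (fun j => tt j w) x = i] =
    [set w | ((i == 0)%N || (w <= Q i)) && ((i == k) || ~~ (w <= Q i.+1))].
  apply/seteqP; split=> w /=; rewrite /state.
  - have -> : (\sum_(1 <= j < k.+1) ((tt j w <= x%:E)%E : nat))%N = (\sum_(1 <= j < k.+1) ((w <= Q j)%R : nat))%N.
      by apply: eq_big_nat => j /andP[j1 jk]; rewrite /tt thr // s0 // j1.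
    move/eqP; rewrite count_eq //.
    by move=> j j1 jk wQ; apply: le_trans wQ (Qmono _ j1 jk).
  - have -> : (\sum_(1 <= j < k.+1) ((tt j w <= x%:E)%E : nat))%N = (\sum_(1 <= j < k.+1) ((w <= Q j)%R : nat))%N.
      by apply: eq_big_nat => j /andP[j1 jk]; rewrite /tt thr // s0 // j1.
    move=> H; apply/eqP; rewrite count_eq //.
    by move=> j j1 jk wQ; apply: le_trans wQ (Qmono _ j1 jk).
rewrite setE /phat.
have [->|i00] := eqVneq i 0%N.
  rewrite (eq_sym 0%N k) (gtn_eqF k1).
  have -> : [set w : R | (true || (w <= Q 0%N)) && (false || ~~ (w <= Q 1%N))] =
     ~` [set w | w <= Q 1%N].
    by apply/seteqP; split=> w /=; [move/negP|move/negP].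
  rewrite probability_setC; last exact: mle. have U := @unifF R (Q 1%N). rewrite U. rewrite ?EFinB //.
  by apply: Q0; rewrite leqnn k1.
have i0 : (0 < i)%N by rewrite lt0n i00.
case: (ltnP i k) => ik'.
  rewrite (ltn_eqF ik').
  have -> : [set w : R | (false || (w <= Q i)) && (false || ~~ (w <= Q i.+1))] =
     [set w | w <= Q i] `\` [set w | w <= Q i.+1].
    by apply/seteqP; split=> w /=; [move/andP=> [-> /negP]|move=> [-> /negP ->]].
  have U1 := @unifF R (Q i); have U2 := @unifF R (Q i.+1).
  have Qi : 0 <= Q i by apply: Q0; rewrite i0 ltnW.
  have Qi1 : 0 <= Q i.+1 by apply: Q0; rewrite ik'.
  rewrite measureD; [|exact: mle|exact: mle|]; last first.
    by apply: le_lt_trans (probability_le1 _ _) _; [exact: mle|rewrite ltry].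
  rewrite setIidr.
    rewrite EFinB; congr (_ - _)%E; [exact: U1|exact: U2].
  by move=> w /= wQ; apply: le_trans wQ (Qmono _ i0 ik').
have -> : i = k by apply/eqP; rewrite eqn_leq ik ik'.
rewrite eqxx.
have -> : [set w : R | (false || (w <= Q k)) && (true || ~~ (w <= Q k.+1))] =
     [set w | w <= Q k].
  by apply/seteqP; split=> w /=; [move/andP=> []|move=> ->].
have U := @unifF R (Q k); rewrite U //.
by apply: Q0; rewrite k1 leqnn.
Qed.
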